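(* Let $\mathbf{k}$ be a field of characteristic zero, $n\ge3$, and let $S=(a_1,\dots,a_n)$, $S'=(a'_1,\dots,a'_n)$ have positive integer entries. Assume $i\in\{1,\dots,n\}$ is such that $S\le^iS'$, and set $k=a'_i/a_i\in\mathbb{N}\setminus\{0\}$. Then $B_S\cong B_{S'}^{(k)}$. Consequently $\mathrm{Proj}\,B_S\cong\mathrm{Proj}\,B_{S'}$.
   Context: $B_T=\mathbf{k}[X_1,\dots,X_n]/\langle X_1^{t_1}+\cdots+X_n^{t_n}\rangle$ for $T=(t_1,\dots,t_n)$, with its standard $\mathbb{N}$-grading in which the image of $X_j$ is homogeneous of degree $\mathrm{lcm}(T)/t_j$. For an $\mathbb{N}$-graded ring $R=\bigoplus_{m\ge0}R_m$ and $k>0$, $R^{(k)}=\bigoplus_{m\ge0}R_{mk}$. $S_i$ denotes $S$ with the $i$-th entry removed, $g_i(S)=\gcd(a_i,\mathrm{lcm}(S_i))$, and $S\le^iS'$ means $S_i=S'_i$ and $g_i(S')\mid a_i\mid a'_i$. *)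

(* Defs.v *)
From HB Require Import structures.
From mathcomp Require Import all_boot all_order all_algebra.
From mathcomp Require Import ring_quotient generic_quotient.
From mathcomp Require Import mpoly.
From Stdlib Require Import ClassicalEpsilon.

Set Implicit Arguments.
Unset Strict Implicit.
Unset Printing Implicit Defensive.

Import GRing.Theory.
Local Open Scope ring_scope.
Local Open Scope quotient_scope.

Definition lcmT (n : nat) (T : 'I_n -> nat) : nat := \big[lcmn/1%N]_(j < n) T j.

Definition lcm_drop (n : nat) (S : 'I_n -> nat) (i : 'I_n) : nat :=
  \big[lcmn/1%N]_(j < n | j != i) S j.

Definition g_ (n : nat) (i : 'I_n) (S : 'I_n -> nat) : nat :=
  gcdn (S i) (lcm_drop S i).

Definition le_i (n : nat) (i : 'I_n) (S S' : 'I_n -> nat) : Prop :=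
  (forall j : 'I_n, j != i -> S j = S' j) /\
  (g_ i S' %| S i)%N /\ (S i %| S' i)%N.

Section PB.
Variables (K : fieldType) (n : nat) (T : 'I_n -> nat).

Definition pbpoly : {mpoly K[n]} := \sum_(j < n) 'X_j ^+ T j.

Definition mdvd (f p : {mpoly K[n]}) : bool :=
  if excluded_middle_informative (exists q, p = q * f) then true else false.

Lemma mdvdP f p : reflect (exists q, p = q * f) (mdvd f p).
Proof.
rewrite /mdvd; case: excluded_middle_informative => H; constructor => //.
Qed.

(* The ideal <X_1^{t_1}+...+X_n^{t_n}>.  (Only used for tuples with
   positive entries; for tuples with a zero entry this predicate is
   conventionally the zero ideal, which is irrelevant for the theorem.) *)
Definition pbideal (p : {mpoly K[n]}) : bool :=
  if [forall j, (0 < T j)%N] then mdvd pbpoly p else p == 0.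

Lemma pbideal_closed : idealr_closed pbideal.
Proof.
have [Tpos|Tn] := boolP [forall j, (0 < T j)%N].
  have E p : pbideal p = mdvd pbpoly p by rewrite /pbideal Tpos.
  split.
  - by rewrite -topredE /= E; apply/mdvdP; exists 0; rewrite mul0r.
  - rewrite -topredE /= E; apply/mdvdP => -[q /(congr1 (meval (fun _ => 0))) /eqP].
    rewrite meval1 mevalM /pbpoly raddf_sum /= big1 ?mulr0 ?oner_eq0 //.
    move=> j _; rewrite rmorphXn /= mevalXU expr0n.
    by have := forallP Tpos j; case: (T j).
  - move=> a u v; rewrite -!topredE /= !E => /mdvdP[q1 ->] /mdvdP[q2 ->].
    by apply/mdvdP; exists (a * q1 + q2); rewrite mulrDl mulrA.
have E p : pbideal p = (p == 0) by rewrite /pbideal (negbTE Tn).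
split.
- by rewrite -topredE /= E.
- by rewrite -topredE /= E oner_eq0.
- by move=> a u v; rewrite -!topredE /= !E => /eqP -> /eqP ->; rewrite mulr0 addr0.
Qed.

HB.instance Definition _ := isIdealr.Build {mpoly K[n]} pbideal pbideal_closed.

Definition B := {ideal_quot (pbideal : idealr {mpoly K[n]})}.

Definition piB (p : {mpoly K[n]}) : B := \pi_B p.

Definition wdeg (m : 'X_{1..n}) : nat := \sum_(j < n) m j * (lcmT T %/ T j).

(* p is weighted-homogeneous of degree d (0 is homogeneous of every degree) *)
Definition whomog (d : nat) (p : {mpoly K[n]}) : Prop :=
  forall m, m \in msupp p -> wdeg m = d.

Definition homogB (d : nat) (b : B) : Prop :=
  exists p, whomog d p /\ b = piB p.

Definition veronese (k : nat) (b : B) : Prop :=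
  exists s : seq (nat * B),
    (forall x, x \in s -> homogB (x.1 * k) x.2) /\ b = \sum_(x <- s) x.2.

End PB.

Arguments whomog {K n} T d p.
Arguments homogB {K n} T d b.
Arguments veronese {K n} T k b.

(* Main.v *)
Require Import Defs.
From HB Require Import structures.
From mathcomp Require Import all_boot all_order all_algebra.
From mathcomp Require Import ring_quotient generic_quotient mpoly.
Import GRing.Theory.
Set Implicit Arguments.
Unset Strict Implicit.
Unset Printing Implicit Defensive.
Local Open Scope ring_scope.

Section Poly.
Variables (K : fieldType) (n : nat) (i : 'I_n) (k : nat).
Hypothesis hk : (0 < k)%N.

Definition emn (m : 'X_{1..n}) : 'X_{1..n} :=
  [multinom (if j == i then k * m j else m j)%N | j < n].
Definition smn (m : 'X_{1..n}) : 'X_{1..n} :=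
  [multinom (if j == i then m j %/ k else m j)%N | j < n].

Lemma emnE m j : emn m j = if j == i then (k * m j)%N else m j.
Proof. by rewrite mnmE. Qed.
Lemma smnE m j : smn m j = if j == i then (m j %/ k)%N else m j.
Proof. by rewrite mnmE. Qed.

Lemma smnK m : smn (emn m) = m.
Proof.
apply/mnmP => j; rewrite smnE !emnE; case: eqP => // ->.
by rewrite ?eqxx mulKn.
Qed.

Lemma emnK (m : 'X_{1..n}) : (k %| m i)%N -> emn (smn m) = m.
Proof.
move=> d; apply/mnmP => j; rewrite emnE !smnE; case: eqP => // ->.
by rewrite mulnC divnK.
Qed.

Lemma dvd_emn m : (k %| emn m i)%N.
Proof. by rewrite emnE eqxx dvdn_mulr. Qed.

Lemma emn_eq (m m' : 'X_{1..n}) : (emn m == m') = (k %| m' i)%N && (m == smn m').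
Proof.
apply/eqP/andP => [<-|[d /eqP ->]]; last exact: emnK.
by rewrite dvd_emn smnK.
Qed.

Definition lq : n.-tuple {mpoly K[n]} :=
  [tuple (if j == i then 'X_i ^+ k else 'X_j) | j < n].

Local Notation F := (comp_mpoly lq).

Lemma FX m : F 'X_[m] = 'X_[emn m].
Proof.
rewrite comp_mpolyX mpolyXE_id; apply: eq_bigr => j _.
rewrite tnth_mktuple emnE; case: eqP => // ->; by rewrite exprM.
Qed.

Lemma FE p : F p = \sum_(m <- msupp p) p@_m *: 'X_[emn m].
Proof. by rewrite comp_mpolyEX; apply: eq_bigr => m _; rewrite -FX. Qed.

Lemma sum_coef (q : {mpoly K[n]}) m' :
  \sum_(m <- msupp q) q@_m * (m == m')%:R = q@_m'.
Proof.
rewrite [in RHS](mpolyE q) raddf_sum /=; apply: eq_bigr => m _.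
by rewrite mcoeffZ mcoeffX.
Qed.

Lemma mcoeffF p (m' : 'X_{1..n}) : (F p)@_m' = if (k %| m' i)%N then p@_(smn m') else 0.
Proof.
rewrite FE raddf_sum /=.
under eq_bigr => m _ do rewrite mcoeffZ mcoeffX emn_eq.
case: ifP => d.
  by rewrite -sum_coef.
by rewrite big1 // => m _; rewrite mulr0.
Qed.

Definition gX (m : 'X_{1..n}) : {mpoly K[n]} :=
  if (k %| m i)%N then 'X_[smn m] else 0.

Definition G (q : {mpoly K[n]}) : {mpoly K[n]} :=
  \sum_(m <- msupp q) q@_m *: gX m.

Lemma mcoeffG q m : (G q)@_m = q@_(emn m).
Proof.
rewrite /G raddf_sum /= -sum_coef; apply: eq_bigr => m' _.
rewrite mcoeffZ /gX [m' == _]eq_sym emn_eq; case: ifP => d.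
  by rewrite mcoeffX /= eq_sym.
by rewrite mcoeff0.
Qed.

Lemma G_is_additive : zmod_morphism G.
Proof. by move=> x y; apply/mpolyP => m; rewrite mcoeffB !mcoeffG mcoeffB. Qed.
HB.instance Definition _ := GRing.isZmodMorphism.Build _ _ G G_is_additive.
Lemma G_is_scalable : scalable G.
Proof. by move=> c x; apply/mpolyP => m; rewrite mcoeffZ !mcoeffG mcoeffZ. Qed.
HB.instance Definition _ := GRing.isScalable.Build K _ _ *:%R G G_is_scalable.

Lemma GF p : G (F p) = p.
Proof. by apply/mpolyP => m; rewrite mcoeffG mcoeffF dvd_emn smnK. Qed.

Lemma FG q : (forall m, m \in msupp q -> (k %| m i)%N) -> F (G q) = q.
Proof.
move=> H; apply/mpolyP => m; rewrite mcoeffF; case: ifP => d.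
  by rewrite mcoeffG emnK.
by apply/eqP; rewrite eq_sym mcoeff_eq0; apply/negP => /H; rewrite d.
Qed.

Lemma GX m : G 'X_[m] = gX m.
Proof.
apply/mpolyP => r; rewrite mcoeffG mcoeffX /gX [m == _]eq_sym emn_eq.
case: ifP => d; first by rewrite mcoeffX eq_sym.
by rewrite mcoeff0.
Qed.

Lemma G_FX mu q : G ('X_[emn mu] * q) = 'X_[mu] * G q.
Proof.
rewrite {1}(mpolyE q) mulr_sumr raddf_sum [in RHS](mpolyE q) !raddf_sum /=.
rewrite mulr_sumr; apply: eq_bigr => nu _.
rewrite -scalerAr !linearZ /= -scalerAr; congr (_ *: _).
rewrite -mpolyXD !GX /gX mnmDE emnE eqxx dvdn_addr ?dvdn_mulr //.
case: ifP => d; last by rewrite mulr0.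
rewrite -mpolyXD; congr 'X_[_]; apply/mnmP => j.
rewrite mnmDE !smnE mnmDE emnE; case: eqP => // ->.
by rewrite divnDl ?dvdn_mulr // mulKn.
Qed.

Lemma G_FM a q : G (F a * q) = a * G q.
Proof.
rewrite {1}(mpolyE a) [in RHS](mpolyE a) raddf_sum /= !mulr_suml raddf_sum.
apply: eq_bigr => mu _.
by rewrite linearZ /= FX -scalerAl linearZ /= G_FX scalerAl.
Qed.

End Poly.
Section Arith.
Variables (n : nat) (S S' : 'I_n -> nat) (i : 'I_n).
Hypotheses (hS : forall j, (0 < S j)%N) (hS' : forall j, (0 < S' j)%N)
  (hle : le_i i S S').
Let k := (S' i %/ S i)%N.

Lemma lcmT_split (T : 'I_n -> nat) : lcmT T = lcmn (T i) (lcm_drop T i).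
Proof. by rewrite /lcmT (bigD1 i). Qed.

Lemma dvd_lcmT (T : 'I_n -> nat) j : (T j %| lcmT T)%N.
Proof. by apply: (biglcmn_sup j). Qed.

Lemma kS : (k * S i = S' i)%N.
Proof. by rewrite /k divnK //; case: hle => _ []. Qed.

Lemma k_gt0 : (0 < k)%N.
Proof. have := hS' i; rewrite -kS; by case: k. Qed.

Lemma Mdrop : lcm_drop S i = lcm_drop S' i.
Proof. by apply: eq_bigr => j /hle.1. Qed.

Let M := lcm_drop S i.
Let g := gcdn (S' i) M.

Lemma g_gt0 : (0 < g)%N.
Proof. by rewrite gcdn_gt0 hS'. Qed.

Lemma gS : gcdn (S i) M = g.
Proof.
case: hle => _ [hg hd].
apply/eqP; rewrite eqn_dvd; apply/andP; split.
  by rewrite dvdn_gcd dvdn_gcdr andbT (dvdn_trans (dvdn_gcdl _ _) hd).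
by rewrite dvdn_gcd /g /M Mdrop hg dvdn_gcdr.
Qed.

Lemma LL : (lcmT S' = k * lcmT S)%N.
Proof.
apply/eqP; rewrite -(eqn_pmul2r g_gt0).
rewrite !lcmT_split -Mdrop -mulnA -{2}gS !muln_lcm_gcd -/M mulnA kS //.
Qed.

Lemma Ldiv_ne j : j != i -> (lcmT S' %/ S' j = k * (lcmT S %/ S j))%N.
Proof.
move=> ji; rewrite LL -hle.1 // muln_divA //; exact: dvd_lcmT.
Qed.

Lemma Ldiv_i : (lcmT S' %/ S' i = lcmT S %/ S i)%N.
Proof. by rewrite LL -kS divnMl // k_gt0. Qed.

Lemma cop : coprime k (lcmT S %/ S i).
Proof.
have gM : (g %| M)%N by rewrite dvdn_gcdr.
have gSi : (g %| S i)%N by rewrite -gS dvdn_gcdl.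
have e1 : (lcmT S %/ S i = M %/ g)%N.
  apply/eqP; rewrite -(eqn_pmul2l (hS i)) [X in X == _]mulnC divnK ?dvd_lcmT //.
  rewrite -(eqn_pmul2r g_gt0) -mulnA divnK //.
  by rewrite lcmT_split -gS muln_lcm_gcd.
rewrite e1; apply: (@coprime_dvdl _ (S' i %/ g)).
  by rewrite -kS -muln_divA // dvdn_mulr.
rewrite /coprime; apply/eqP; apply/eqP; rewrite -(eqn_pmul2r g_gt0) mul1n.
by rewrite muln_gcdl !divnK ?dvdn_gcdl.
Qed.

End Arith.

Lemma piB_repr (K : fieldType) n (T : 'I_n -> nat) (x : B K T) : x = piB T (repr x).
Proof. by rewrite /piB reprK. Qed.
Lemma piBE (K : fieldType) n (T : 'I_n -> nat) (p q : {mpoly K[n]}) :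
  (piB T p == piB T q) = pbideal T (p - q).
Proof. by rewrite /piB -Quotient.idealrBE. Qed.
Lemma piBB (K : fieldType) n (T : 'I_n -> nat) (p q : {mpoly K[n]}) :
  piB T (p - q) = piB T p - piB T q.
Proof. by rewrite /piB rmorphB. Qed.
Lemma piBM (K : fieldType) n (T : 'I_n -> nat) (p q : {mpoly K[n]}) :
  piB T (p * q) = piB T p * piB T q.
Proof. by rewrite /piB rmorphM. Qed.
Lemma piB1 (K : fieldType) n (T : 'I_n -> nat) : piB T (1 : {mpoly K[n]}) = 1.
Proof. by rewrite /piB rmorph1. Qed.
Lemma piB_sum (K : fieldType) n (T : 'I_n -> nat) (s : seq 'X_{1..n})
    (h : 'X_{1..n} -> {mpoly K[n]}) :
  piB T (\sum_(x <- s) h x) = \sum_(x <- s) piB T (h x).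
Proof. by rewrite /piB rmorph_sum. Qed.
Lemma pbidealE (K : fieldType) n (T : 'I_n -> nat) (hT : forall j, (0 < T j)%N)
   (p : {mpoly K[n]}) : pbideal T p = mdvd (pbpoly K T) p.
Proof.
by rewrite /pbideal; have -> : [forall j, (0 < T j)%N] by apply/forallP.
Qed.

Section Main.
Variables (K : fieldType) (n : nat) (S S' : 'I_n -> nat) (i : 'I_n).
Hypotheses (hS : forall j, (0 < S j)%N) (hS' : forall j, (0 < S' j)%N)
  (hle : le_i i S S').
Let k := (S' i %/ S i)%N.
Fact hk : (0 < k)%N. Proof. exact: (k_gt0 hS' hle). Qed.
Local Notation F := (comp_mpoly (lq K i k)).

Lemma F_pb : F (pbpoly K S) = pbpoly K S'.
Proof.
rewrite /pbpoly rmorph_sum /=; apply: eq_bigr => j _.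
rewrite rmorphXn /= comp_mpolyXU -tnth_nth tnth_mktuple.
case: eqP => [->|/eqP ji]; last by rewrite hle.1.
by rewrite -exprM /k (kS hle).
Qed.

Lemma F_ideal p : pbideal S p -> pbideal S' (F p).
Proof.
rewrite !pbidealE // => /mdvdP [q ->]; apply/mdvdP; exists (F q).
by rewrite rmorphM /= F_pb.
Qed.

Lemma F_ideal_inv p : pbideal S' (F p) -> pbideal S p.
Proof.
rewrite !pbidealE // => /mdvdP [q e]; apply/mdvdP; exists (G i k q).
by rewrite -(GF i hk p) e -F_pb mulrC (G_FM i hk) mulrC.
Qed.

Definition fq (x : B K S) : B K S' := piB S' (F (repr x)).

Lemma fq_pi p : fq (piB S p) = piB S' (F p).
Proof.
apply/eqP; rewrite piBE -rmorphB /=; apply: F_ideal.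
by rewrite -piBE -piB_repr.
Qed.

Lemma fq_is_zmod : zmod_morphism fq.
Proof.
move=> x y; rewrite [x]piB_repr [y]piB_repr -piBB !fq_pi -piBB.
by rewrite rmorphB.
Qed.

Lemma fq_is_monoid : monoid_morphism fq.
Proof.
split.
  by rewrite -(piB1 K S) fq_pi rmorph1 piB1.
move=> x y; rewrite [x]piB_repr [y]piB_repr -piBM !fq_pi -piBM.
by rewrite rmorphM.
Qed.

Definition fR : {rmorphism B K S -> B K S'} :=
  HB.pack fq (GRing.isZmodMorphism.Build _ _ fq fq_is_zmod)
    (GRing.isMonoidMorphism.Build _ _ fq fq_is_monoid).

Lemma fRE x : fR x = fq x. Proof. by []. Qed.


Lemma wdeg_emn mu : wdeg S' (emn i k mu) = (k * wdeg S mu)%N.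
Proof.
rewrite /wdeg big_distrr; apply: eq_bigr => j _ /=; rewrite emnE.
case: eqP => [->|/eqP ji].
  by rewrite (Ldiv_i hS' hle) mulnA.
by rewrite (Ldiv_ne hS' hle ji) mulnCA.
Qed.

Lemma wdeg_dvd (m' : 'X_{1..n}) : (k %| wdeg S' m')%N -> (k %| m' i)%N.
Proof.
rewrite /wdeg (bigD1 i) //= dvdn_addl.
  by rewrite (Ldiv_i hS' hle) Gauss_dvdl // (cop hS hS' hle).
apply: dvdn_sum => j ji; rewrite (Ldiv_ne hS' hle ji) mulnCA dvdn_mulr //.
Qed.

Lemma graded (m : nat) (b' : B K S') :
  homogB S' (m * k) b' <-> exists b, homogB S m b /\ fR b = b'.
Proof.
split.
  case=> p [hp ->].
  have div m' : m' \in msupp p -> (k %| m' i)%N.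
    by move=> /hp e; apply: wdeg_dvd; rewrite e dvdn_mull.
  exists (piB S (G i k p)); split; last by rewrite fRE fq_pi (FG hk div).
  exists (G i k p); split => // mu.
  rewrite mcoeff_msupp (mcoeffG i hk) -mcoeff_msupp => /hp.
  rewrite wdeg_emn => e; apply/eqP; rewrite -(eqn_pmul2l hk) e mulnC.
  by [].
case=> b [[p [hp ->]] <-].
exists (F p); split; last by rewrite fRE fq_pi.
move=> m'; rewrite mcoeff_msupp (mcoeffF i hk); case: ifP => d; last by rewrite eqxx.
rewrite -mcoeff_msupp => /hp e.
by rewrite -(emnK d) wdeg_emn e mulnC.
Qed.

End Main.

Theorem proposition5p2 (K : fieldType) (hK : [pchar K] =i pred0)
    (n : nat) (hn : (3 <= n)%N) (S S' : 'I_n -> nat)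
    (hS : forall j, (0 < S j)%N) (hS' : forall j, (0 < S' j)%N)
    (i : 'I_n) (hle : le_i i S S') :
  let k := (S' i %/ S i)%N in
  (0 < k)%N /\
  exists f : {rmorphism B K S -> B K S'},
    (* f is a k-algebra map *)
    (forall c : K, f (piB S c%:MP) = piB S' c%:MP) /\
    (* f is injective with image the Veronese subring B_{S'}^{(k)} *)
    injective f /\
    (forall b' : B K S', veronese S' k b' <-> exists b, f b = b') /\
    (* f is graded: it maps (B_S)_m onto (B_{S'})_{mk} *)
    (forall (m : nat) (b' : B K S'),
        homogB S' (m * k) b' <-> exists b, homogB S m b /\ f b = b').
Proof.
move=> k.
have hk : (0 < k)%N by exact: k_gt0 hS' hle.
split => //.
exists (fR K hS hS' hle).
split; first by move=> c; rewrite fRE (fq_pi hS hS' hle) comp_mpolyC.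
split.
  move=> x y; rewrite !fRE [x]piB_repr [y]piB_repr !(fq_pi hS hS' hle) => /eqP.
  rewrite piBE -rmorphB => /(F_ideal_inv hS hS' hle).
  by rewrite -piBE => /eqP.
split; last by move=> m b'; exact: graded.
move=> b'; split.
  case=> s [hs ->]; elim: s hs => [|x s IH] hs.
    by exists 0; rewrite rmorph0 big_nil.
  have [b1 [_ e1]] := (graded hS hS' hle x.1 x.2).1 (hs x (mem_head _ _)).
  have [b2 e2] : exists b, fR K hS hS' hle b = \sum_(y <- s) y.2.
    by apply: IH => y hy; apply: hs; rewrite in_cons hy orbT.
  by exists (b1 + b2); rewrite rmorphD e1 e2 big_cons.
case=> b <-; rewrite [b]piB_repr; set p := repr b.
exists [seq (wdeg S m, fR K hS hS' hle (piB S (p@_m *: 'X_[m]))) | m <- msupp p].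
split.
  move=> x /mapP [m _ ->] /=; apply/graded; exists (piB S (p@_m *: 'X_[m])).
  split => //; exists (p@_m *: 'X_[m]); split => // m'.
  rewrite mcoeff_msupp mcoeffZ mcoeffX; case: (m =P m') => [->//|_].
  by rewrite mulr0 eqxx.
by rewrite big_map {1}(mpolyE p) piB_sum rmorph_sum.
Qed.
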